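(* In an instance of the large-market pricing problem described in the context with uniform peak $\lambda_i(0)=\lambda^{max}$, fix $k\ge1$, a set $B_1$ of buyer types and a set $S_1$ of items. Suppose that when all items of $S_1$ are priced at $p$, with $(\vec x^a,\vec y^a)$ the best-response demand of the buyer types in $B_1$ together with a corresponding min-cost allocation using only items of $S_1$, some item $t\in S_1$ satisfies $p-c_t(y^a_t)\ge\frac1k(\lambda^{max}-c_t(y^a_t))$. Let $p_2\ge p$ and let $(\vec x^b,\vec y^b)$ be the min-cost best-response solution when all items of $S_1$ are priced at $p_2$. Then $p_2-c_t(y^b_t)\ge\frac1k(\lambda^{max}-c_t(y^b_t))$.
   Context: Finite item set $S$, finite set $B$ of buyer types, bipartite graph $G=(B\cup S,E)$, $S_i=\{t:(i,t)\in E\}$. Buyer type $i$ has inverse demand $\lambda_i:[0,T_i]\to\mathbb{R}_{\ge0}$, non-increasing, continuously differentiable on $(0,T_i)$, with monotone hazard rate ($\lambda_i'/\lambda_i$ non-increasing), $\lambda_i(0)=\lambda^{max}$. Item $t$ has convex continuously differentiable production cost $C_t$ with derivative $c_t$. When all items available to buyer type $i$ have price $q$, its best-response demand $x_i$ satisfies $\lambda_i(x_i)=q$. A feasible allocation for demand $\vec x$ is $y_t(i)\ge0$ ($>0$ only if $(i,t)\in E$) with $\sum_ty_t(i)=x_i$, $y_t=\sum_iy_t(i)$; a min-cost allocation minimizes $\sum_tC_t(y_t)$ among feasible ones. *)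

(* Defs.v *)
From HB Require Import structures.
From mathcomp Require Import all_boot all_order all_algebra.
From mathcomp Require Import all_classical all_reals all_analysis.
Set Implicit Arguments. Unset Strict Implicit. Unset Printing Implicit Defensive.
Import Order.TTheory GRing.Theory Num.Theory.
Import numFieldNormedType.Exports.
Local Open Scope classical_set_scope.
Local Open Scope ring_scope.

Section Market.
Variables (R : realType) (B S : finType).

Definition inverse_demand (T lmax : R) (lam : R -> R) : Prop :=
  [/\ 0 < T /\ lam 0 = lmax,
      (forall x, 0 <= x <= T -> 0 <= lam x),
      (forall x y, 0 <= x -> x <= y -> y <= T -> lam y <= lam x),
      (forall x, 0 < x < T -> derivable lam x 1 /\ {for x, continuous (derive1 lam)}) &
      (forall x y, 0 < x -> x <= y -> y < T -> 0 < lam x -> 0 < lam y ->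
         derive1 lam y / lam y <= derive1 lam x / lam x)].

Definition production_cost (C c : R -> R) : Prop :=
  [/\ (forall x y a, 0 <= x -> 0 <= y -> 0 <= a <= 1 ->
         C (a * x + (1 - a) * y) <= a * C x + (1 - a) * C y),
      (forall y : R, 0 < y -> is_derive y (1 : R) C (c y)),
      {within `[0, +oo[, continuous C} &
      {within `[0, +oo[, continuous c}].

Definition best_response (B1 : {set B}) (T : B -> R) (lam : B -> R -> R)
    (q : R) (x : B -> R) : Prop :=
  forall i, i \in B1 -> 0 <= x i <= T i /\ lam i (x i) = q.

Definition feasible_alloc (E : B -> S -> bool) (B1 : {set B}) (S1 : {set S})
    (x : B -> R) (y : B -> S -> R) : Prop :=
  [/\ (forall i t, 0 <= y i t),
      (forall i t, y i t != 0 -> [&& i \in B1, t \in S1 & E i t]) &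
      (forall i, i \in B1 -> \sum_(t : S) y i t = x i)].

(* total production y_t = sum_i y_t(i) *)
Definition load (y : B -> S -> R) (t : S) : R := \sum_(i : B) y i t.

Definition alloc_cost (C : S -> R -> R) (S1 : {set S}) (y : B -> S -> R) : R :=
  \sum_(t in S1) C t (load y t).

Definition min_cost_alloc (E : B -> S -> bool) (C : S -> R -> R)
    (B1 : {set B}) (S1 : {set S}) (x : B -> R) (y : B -> S -> R) : Prop :=
  feasible_alloc E B1 S1 x y /\
  (forall y', feasible_alloc E B1 S1 x y' -> alloc_cost C S1 y <= alloc_cost C S1 y').

End Market.

(* Main.v *)
Require Import Defs.
From HB Require Import structures.
From mathcomp Require Import all_boot all_order all_algebra.
From mathcomp Require Import all_classical all_reals all_analysis.
From mathcomp Require Import ring lra.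
Import Order.TTheory GRing.Theory Num.Theory.
Import numFieldNormedType.Exports.
Local Open Scope classical_set_scope.
Local Open Scope ring_scope.

Lemma mvt_C {R : realType} {C c : R -> R} {a b : R} :
  production_cost C c -> 0 <= a -> a < b ->
  exists2 z, a < z < b & C b - C a = c z * (b - a).
Proof.
move=> [_ Hd HCc _] a0 ab.
have hd : forall x, x \in `]a, b[ -> is_derive x 1 C (c x).
  move=> x; rewrite in_itv /= => /andP[ax _]; apply: Hd; exact: le_lt_trans ax.
have hc : {within `[a, b], continuous C}.
  apply: continuous_subspaceW HCc => x /=; rewrite !in_itv /= => /andP[ax _].
  by rewrite andbT (le_trans a0 ax).
have [z zab ->] := MVT ab hd hc.
by exists z => //; move: zab; rewrite in_itv.
Qed.

Lemma conv_core {R : realType} {C c : R -> R} {x z y : R} :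
  production_cost C c -> 0 <= x -> x < z -> z < y ->
  (y - x) * C z <= (y - z) * C x + (z - x) * C y.
Proof.
move=> [Hcv _ _ _] x0 xz zy.
have yx : 0 < y - x by lra.
set a := (y - z) / (y - x).
have a01 : 0 <= a <= 1.
  rewrite /a; apply/andP; split; first by apply: divr_ge0; lra.
  by rewrite ler_pdivrMr //; lra.
have Hz : a * x + (1 - a) * y = z.
  rewrite /a; field; lra.
have := Hcv x y a x0 ltac:(lra) a01; rewrite Hz => H.
have e1 : (y - x) * (a * C x + (1 - a) * C y) = (y - z) * C x + (z - x) * C y.
  by rewrite /a; field; lra.
by rewrite -e1 ler_pM2l.
Qed.

Lemma cont_eps {R : realType} {f : R -> R} {x eta : R} :
  {within `[0, +oo[, continuous f} -> 0 <= x -> 0 < eta ->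
  exists2 d : R, 0 < d & forall z, 0 <= z -> `|x - z| < d -> `|f x - f z| < eta.
Proof.
move=> /subspace_continuousP cf x0 eta0.
have Ax : `[0, +oo[%classic x by rewrite /= in_itv /= x0.
move: (cf x Ax) => /cvgrPdist_lt /(_ _ eta0).
rewrite near_withinE => /nbhs_ballP [d d0 Hd].
exists d => // z z0 xz; apply: (Hd z) => //.
by rewrite /= in_itv /= z0.
Qed.

Lemma c_mono {R : realType} {C c : R -> R} {x y : R} :
  production_cost C c -> 0 <= x -> x <= y -> c x <= c y.
Proof.
move=> HC x0 xy.
case: (ltrP (c y) (c x)) => // Hlt.
have [exy|xlty] := eqVneq x y; first by move: Hlt; rewrite exy ltxx.
have {xlty} xlty : x < y by rewrite lt_neqAle xlty xy.
set eta := (c x - c y) / 2.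
have eta0 : 0 < eta by rewrite /eta; lra.
have [_ _ _ Hcc] := HC.
have [d1 d10 H1] := cont_eps Hcc x0 eta0.
have [d2 d20 H2] := cont_eps Hcc (le_trans x0 xy) eta0.
set h := Num.min (Num.min d1 d2) ((y - x) / 2) / 2.
have hm : Num.min (Num.min d1 d2) ((y - x) / 2) <= d1 /\
          Num.min (Num.min d1 d2) ((y - x) / 2) <= d2 /\
          Num.min (Num.min d1 d2) ((y - x) / 2) <= (y - x) / 2 /\
          0 < Num.min (Num.min d1 d2) ((y - x) / 2).
  rewrite !ge_min !lt_min d10 d20 /= !lexx /= !orbT /=.
  by split => //; lra.
have h0 : 0 < h by rewrite /h; lra.
have hd1 : h < d1 by rewrite /h; lra.
have hd2 : h < d2 by rewrite /h; lra.
have hyx : h < y - x by rewrite /h; lra.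
have xh : x < x + h by lra.
have [z1 /andP[z1a z1b] Ez1] := mvt_C HC x0 xh.
have yh0 : 0 <= y - h by lra.
have yh : y - h < y by lra.
have [z2 /andP[z2a z2b] Ez2] := mvt_C HC yh0 yh.
have k1 := conv_core HC x0 xh (_ : x + h < y).
have k2 := conv_core HC x0 (_ : x < y - h) yh.
have c1 : c x - c z1 < eta.
  have := H1 z1 ltac:(lra); rewrite !ltr_norml => Hn.
  have /andP[] := Hn ltac:(apply/andP; split; lra); lra.
have c2 : c z2 - c y < eta.
  have := H2 z2 ltac:(lra); rewrite !ltr_norml => Hn.
  have /andP[] := Hn ltac:(apply/andP; split; lra); lra.
have K : (y - x) * ((C (x + h) - C x) - (C y - C (y - h))) <= 0.
  have := k1 ltac:(lra); have := k2 ltac:(lra).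
  set a1 := (y - x) * C (x + h); set a2 := (y - x) * C (y - h).
  set b1 := (y - (x + h)) * C x + (x + h - x) * C y.
  set b2 := (y - (y - h)) * C x + (y - h - x) * C y.
  have -> : (y - x) * (C (x + h) - C x - (C y - C (y - h))) = (a1 - b1) + (a2 - b2).
    by rewrite /a1 /a2 /b1 /b2; ring.
  move=> u v; rewrite -subr_le0 in u; rewrite -subr_le0 in v; lra.
have K2 : (C (x + h) - C x) - (C y - C (y - h)) <= 0.
  have yx : 0 < y - x by lra.
  by rewrite -(pmulr_rle0 _ yx).
have K3 : c z2 * h < c z1 * h by rewrite ltr_pM2r //; move: c1 c2; rewrite /eta; lra.
move: K2; rewrite Ez1 Ez2.
have -> : x + h - x = h by ring.
have -> : y - (y - h) = h by ring.
lra.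
Qed.

Lemma sum_delta {R : realType} {I : finType} (u : I) (a : R) :
  \sum_(v : I) (v == u)%:R * a = a.
Proof.
rewrite (bigD1 u) //= eqxx mul1r big1 ?addr0 // => j /negbTE ->.
by rewrite mul0r.
Qed.

Lemma load_ge {R : realType} {B S : finType} (y : B -> S -> R) i s :
  (forall i t, 0 <= y i t) -> y i s <= load y s.
Proof.
move=> y0; rewrite /load (bigD1 i) //= lerDl.
by apply: sumr_ge0 => j _.
Qed.

Lemma load_ge0 {R : realType} {B S : finType} (y : B -> S -> R) s :
  (forall i t, 0 <= y i t) -> 0 <= load y s.
Proof. by move=> y0; apply: sumr_ge0 => j _. Qed.

Lemma local_opt {R : realType} {B S : finType} (E : B -> S -> bool)
  (C c : S -> R -> R) (B1 : {set B}) (S1 : {set S}) (x : B -> R)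
  (y : B -> S -> R) (i : B) (s u : S) :
  (forall t, production_cost (C t) (c t)) ->
  min_cost_alloc E C B1 S1 x y -> 0 < y i s -> u \in S1 -> E i u ->
  c s (load y s) <= c u (load y u).
Proof.
move=> HC [[y0 ysupp ysum] ymin] yis uS Eiu.
have [esu|nsu] := eqVneq s u; first by rewrite esu.
have /and3P[iB sS Eis] : [&& i \in B1, s \in S1 & E i s].
  by apply: ysupp; rewrite gt_eqF.
set Ls := load y s; set Lu := load y u.
have Lsy : y i s <= Ls := load_ge y i s y0.
have Lu0 : 0 <= Lu := load_ge0 y u y0.
case: (ltrP (c u Lu) (c s Ls)) => Hlt; last by [].
exfalso.
set eta := (c s Ls - c u Lu) / 2.
have eta0 : 0 < eta by rewrite /eta; lra.
have [_ _ _ Hcs] := HC s.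
have [_ _ _ Hcu] := HC u.
have [d1 d10 H1] := cont_eps Hcs (ltW (lt_le_trans yis Lsy)) eta0.
have [d2 d20 H2] := cont_eps Hcu Lu0 eta0.
set m := Num.min (Num.min d1 d2) (y i s).
have hm : m <= d1 /\ m <= d2 /\ m <= y i s /\ 0 < m.
  rewrite /m !ge_min !lt_min d10 d20 yis /= !lexx /= !orbT /=.
  by split.
set e := m / 2.
have e0 : 0 < e by rewrite /e; lra.
have ed1 : e < d1 by rewrite /e; lra.
have ed2 : e < d2 by rewrite /e; lra.
have eys : e < y i s by rewrite /e; lra.
have se0 : 0 <= Ls - e by lra.
have se : Ls - e < Ls by lra.
have [z1 /andP[z1a z1b] Ez1] := mvt_C (HC s) se0 se.
have ue : Lu < Lu + e by lra.
have [z2 /andP[z2a z2b] Ez2] := mvt_C (HC u) Lu0 ue.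
have c1 : c s Ls - c s z1 < eta.
  have := H1 z1 ltac:(lra); rewrite !ltr_norml => Hn.
  have /andP[] := Hn ltac:(apply/andP; split; lra); lra.
have c2 : c u z2 - c u Lu < eta.
  have := H2 z2 ltac:(lra); rewrite !ltr_norml => Hn.
  have /andP[] := Hn ltac:(apply/andP; split; lra); lra.
pose d (v : S) : R := (v == u)%:R * e - (v == s)%:R * e.
pose y' (j : B) (v : S) : R := y j v + (j == i)%:R * d v.
have ds : d s = - e by rewrite /d eqxx (negbTE nsu) mul0r mul1r sub0r.
have du : d u = e by rewrite /d eqxx eq_sym (negbTE nsu) mul0r mul1r subr0.
have dv v : v != s -> v != u -> d v = 0.
  by move=> nvs nvu; rewrite /d (negbTE nvs) (negbTE nvu) !mul0r subr0.
have loady' v : load y' v = load y v + d v.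
  by rewrite /load /y' big_split /= (sum_delta i (d v)).
have feas : feasible_alloc E B1 S1 x y'.
  split.
  - move=> j v; rewrite /y'; have [eji|nji] := eqVneq j i; last first.
      by rewrite mul0r addr0.
    rewrite eji mul1r; have [evs|nvs] := eqVneq v s.
      by rewrite evs ds; lra.
    have [evu|nvu] := eqVneq v u.
      by rewrite evu du; have := y0 i u; lra.
    by rewrite dv // addr0.
  - move=> j v; rewrite /y'; have [eji|nji] := eqVneq j i; last first.
      by rewrite mul0r addr0; exact: ysupp.
    rewrite eji mul1r; have [evs|nvs] := eqVneq v s.
      by move=> _; rewrite evs iB sS Eis.
    have [evu|nvu] := eqVneq v u.
      by move=> _; rewrite evu iB uS Eiu.
    by rewrite dv // addr0; exact: ysupp.
  - move=> j jB; rewrite /y' big_split /= -ysum //.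
    have -> : \sum_(v : S) (j == i)%:R * d v = 0; last by rewrite addr0.
    rewrite -mulr_sumr /d sumrB !sum_delta subrr; by rewrite mulr0.
have := ymin _ feas.
rewrite /alloc_cost -subr_ge0 -sumrB (bigD1 s) //= (bigD1 u) /=; last first.
  by rewrite uS eq_sym nsu.
rewrite big1; last first.
  move=> v /andP[/andP[_ nvs] nvu]; rewrite loady' dv // addr0 subrr //.
rewrite addr0 !loady' ds du -/Ls -/Lu.
move: Ez1 Ez2.
have -> : Ls - (Ls - e) = e by ring.
have -> : Lu + e - Lu = e by ring.
move=> Ez1 Ez2.
have K3 : c u z2 * e < c s z1 * e by rewrite ltr_pM2r //; move: c1 c2; rewrite /eta; lra.
lra.
Qed.

Lemma sum_lt_ex {R : realType} {I : finType} (P : pred I) (F G : I -> R) :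
  \sum_(i | P i) F i < \sum_(i | P i) G i -> exists i, P i && (F i < G i).
Proof.
move=> Hlt.
have [/existsP [i Hi]|/existsPn H] := boolP [exists i, P i && (F i < G i)].
  by exists i.
exfalso; have : \sum_(i | P i) G i <= \sum_(i | P i) F i.
  apply: ler_sum => i Pi; have := H i; rewrite Pi /= -leNgt; done.
by rewrite leNgt Hlt.
Qed.

Lemma supp0 {R : realType} {B S : finType} {E B1 S1} {x : B -> R} {y : B -> S -> R} {j s} :
  feasible_alloc E B1 S1 x y -> j \notin B1 -> y j s = 0.
Proof.
move=> [_ ys _] jB; apply/eqP; apply: contraNT jB => /ys /and3P[] //.
Qed.

Lemma key_mono {R : realType} {B S : finType} (E : B -> S -> bool)
  (C c : S -> R -> R) (B1 : {set B}) (S1 : {set S}) (xa xb : B -> R)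
  (ya yb : B -> S -> R) (t : S) :
  (forall t, production_cost (C t) (c t)) ->
  min_cost_alloc E C B1 S1 xa ya -> min_cost_alloc E C B1 S1 xb yb ->
  (forall i, i \in B1 -> xb i <= xa i) -> t \in S1 ->
  c t (load yb t) <= c t (load ya t).
Proof.
move=> HC Ha Hb Hx tS.
have Ha' := Ha; have Hb' := Hb.
move: Ha' Hb' => [[ya0 yas yasum] _] [[yb0 ybs ybsum] _].
rewrite leNgt; apply/negP => Hlt.
pose U := [set s in S1 | c s (load ya s) < c s (load yb s)].
have tU : t \in U by rewrite inE tS Hlt.
have UL s : s \in U -> load ya s < load yb s.
  rewrite inE => /andP[_ Hs]; rewrite ltNge; apply/negP => Hle.
  have := c_mono (HC s) (load_ge0 yb s yb0) Hle; rewrite leNgt Hs //.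
have Hsum : \sum_(s in U) load ya s < \sum_(s in U) load yb s.
  rewrite (bigD1 t) //= [X in _ < X](bigD1 t) //=.
  apply: ltr_leD; first exact: UL.
  by apply: ler_sum => s /andP[sU _]; apply: ltW; exact: UL.
move: Hsum; rewrite /load.
rewrite (exchange_big _ _ _ (fun s => s \in U)) /=.
rewrite [X in _ < X](exchange_big _ _ _ (fun s => s \in U)) /=.
move=> /(sum_lt_ex _ _ _) [j /= Hj].
have jB : j \in B1.
  apply: contraLR Hj => jB.
  by rewrite !big1 ?ltxx // => s _; first [exact: (supp0 Ha.1 jB) | exact: (supp0 Hb.1 jB)].
have Hxj := Hx j jB; rewrite -(yasum j jB) -(ybsum j jB) in Hxj.
rewrite (bigID (mem U)) /= [X in _ <= X](bigID (mem U)) /= in Hxj.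
have Hn : \sum_(i | i \notin U) yb j i < \sum_(i | i \notin U) ya j i.
  move: Hxj Hj; lra.
have [u /andP[uU Hu]] := sum_lt_ex _ _ _ Hn.
have [s /andP[sU Hs]] := sum_lt_ex _ _ _ Hj.
have ybjs : 0 < yb j s by have := ya0 j s; lra.
have yaju : 0 < ya j u by have := yb0 j u; lra.
have /and3P[_ uS Eju] := yas j u (lt0r_neq0 yaju).
have /and3P[_ sS Ejs] := ybs j s (lt0r_neq0 ybjs).
have h1 := local_opt _ _ _ _ _ _ _ _ _ _ HC Hb ybjs uS Eju.
have h2 := local_opt _ _ _ _ _ _ _ _ _ _ HC Ha yaju sS Ejs.
move: sU uU; rewrite !inE sS uS /= -leNgt => h3 h4.
lra.
Qed.

Theorem lemma4 (R : realType) (B S : finType) (E : B -> S -> bool)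
    (T : B -> R) (lam : B -> R -> R) (lmax : R)
    (C c : S -> R -> R)
    (Hlam : forall i, inverse_demand (T i) lmax (lam i))
    (HC : forall t, production_cost (C t) (c t))
    (k : R) (Hk : 1 <= k)
    (B1 : {set B}) (S1 : {set S})
    (p p2 : R) (demand : R -> B -> R)
    (ya yb : B -> S -> R) (t : S)
    (Hxa : best_response B1 T lam p (demand p))
    (Hya : min_cost_alloc E C B1 S1 (demand p) ya)
    (Ht : t \in S1)
    (Hpt : p - c t (load ya t) >= k^-1 * (lmax - c t (load ya t)))
    (Hp2 : p <= p2)
    (Hxb : best_response B1 T lam p2 (demand p2))
    (Hyb : min_cost_alloc E C B1 S1 (demand p2) yb) :
  p2 - c t (load yb t) >= k^-1 * (lmax - c t (load yb t)).
Proof.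
have Hd : forall i, i \in B1 -> demand p2 i <= demand p i.
  move=> i iB.
  have [ep|np] := eqVneq p p2; first by rewrite ep.
  have pp2 : p < p2 by rewrite lt_neqAle np Hp2.
  rewrite leNgt; apply/negP => Hlt.
  have [[/andP[a0 aT] la] [/andP[b0 bT] lb]] := (Hxa i iB, Hxb i iB).
  have [_ _ Hmon _ _] := Hlam i.
  have := Hmon _ _ a0 (ltW Hlt) bT; rewrite la lb; lra.
have Hc := key_mono E C c B1 S1 (demand p) (demand p2) ya yb t HC Hya Hyb Hd Ht.
set ca := c t (load ya t) in Hpt Hc *.
set cb := c t (load yb t) in Hc *.
have k0 : 0 < k by lra.
have q0 : 0 < k^-1 by rewrite invr_gt0.
have q1 : k^-1 <= 1 by rewrite invr_le1 // ?unitfE ?gt_eqF.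
have h : 0 <= (1 - k^-1) * (ca - cb) by apply: mulr_ge0; lra.
have e : k^-1 * (lmax - cb) = k^-1 * (lmax - ca) + (ca - cb) - (1 - k^-1) * (ca - cb).
  by ring.
rewrite e; lra.
Qed.
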